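(* Let $(M,\varphi,\xi,\eta,g)$ be a $5$-dimensional almost contact B-metric manifold and let $L$ be a $\varphi$-Kähler-type tensor on $M$. Then $$L=\nu L_1+\nu^* L_2,$$ where, at each point $p\in M$, $\nu=\nu(p)(L)$ and $\nu^*=\nu^*(p)(L)=\nu(p)(L^* )$ are the sectional curvatures with respect to $L$ of the non-degenerate totally real $2$-planes in $T_pM$ orthogonal to $\xi$: namely, for every such $2$-plane $\alpha$ one has $k(\alpha;p)(L)=\nu(p)$ and $k^*(\alpha;p)(L)=\nu^*(p)$. In particular, $M$ has point-wise constant sectional curvatures of the totally real $2$-planes orthogonal to $\xi$ with respect to $L$ (these curvatures depend only on $p$, not on $\alpha$).
   Context: An almost contact B-metric manifold $(M,\varphi,\xi,\eta,g)$ is a $(2n+1)$-dimensional manifold with a $(1,1)$-tensor $\varphi$, a vector field $\xi$, a $1$-form $\eta$ and a pseudo-Riemannian metric $g$ of signature $(n,n+1)$ such that $\varphi\xi=0$, $\varphi^2=-\mathrm{Id}+\eta\otimes\xi$, $\eta\circ\varphi=0$, $\eta(\xi)=1$, and $g(x,y)=-g(\varphi x,\varphi y)+\eta(x)\eta(y)$ for all vector fields $x,y$. A $(0,4)$-tensor $L$ is curvature-like if $L(x,y,z,w)=-L(y,x,z,w)=-L(x,y,w,z)$ and $L(x,y,z,w)+L(y,z,x,w)+L(z,x,y,w)=0$; it is of $\varphi$-Kähler type if additionally $L(x,y,\varphi z,\varphi w)=-L(x,y,z,w)$. The associated tensor is $L^*(x,y,z,w)=L(x,y,z,\varphi w)$.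 Define $\pi_1(x,y,z,w)=g(y,z)g(x,w)-g(x,z)g(y,w)$, $\pi_2(x,y,z,w)=g(y,\varphi z)g(x,\varphi w)-g(x,\varphi z)g(y,\varphi w)$, $\pi_3(x,y,z,w)=-g(y,z)g(x,\varphi w)-g(y,\varphi z)g(x,w)+g(x,z)g(y,\varphi w)+g(x,\varphi z)g(y,w)$, $\pi_4(x,y,z,w)=\eta(y)\eta(z)g(x,w)+\eta(x)\eta(w)g(y,z)-\eta(x)\eta(z)g(y,w)-\eta(y)\eta(w)g(x,z)$, $\pi_5(x,y,z,w)=\eta(y)\eta(z)g(x,\varphi w)+\eta(x)\eta(w)g(y,\varphi z)-\eta(x)\eta(z)g(y,\varphi w)-\eta(y)\eta(w)g(x,\varphi z)$, and $L_1=\pi_1-\pi_2-\pi_4$, $L_2=\pi_3+\pi_5$. A $2$-plane $\alpha\subset T_pM$ is non-degenerate if $g|_\alpha$ is non-degenerate, totally real if $\alpha\perp\varphi\alpha$ (w.r.t. $g$), and orthogonal to $\xi$ if $\alpha\perp\xi$. For such $\alpha$ with any basis $\{x,y\}$, $k(\alpha;p)(L)=\dfrac{L(x,y,y,x)}{\pi_1(x,y,y,x)}$ and $k^*(\alpha;p)(L)=\dfrac{L(x,y,y,\varphi x)}{\pi_1(x,y,y,x)}$. *)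

(* Defs.v *)
(* Pointwise (tangent-space) formalization: T_pM = 'cV[R]_5. *)
From HB Require Import structures.
From mathcomp Require Import all_boot all_order all_algebra.
Set Implicit Arguments. Unset Strict Implicit. Unset Printing Implicit Defensive.
Import Order.TTheory GRing.Theory Num.Theory.
Local Open Scope ring_scope.

Section ACB.
Variable R : rcfType.
Local Notation V := 'cV[R]_5.

Definition gf (G : 'M[R]_5) (x y : V) : R := (x^T *m G *m y) 0 0.
Definition etaf (eta : 'rV[R]_5) (x : V) : R := (eta *m x) 0 0.

(* signature (n, n+1) with n = 2: 2 negative and 3 positive directions *)
Definition signature_2_3 (G : 'M[R]_5) : Prop :=
  exists P : 'M[R]_5, P \in unitmx /\
    P^T *m G *m P = diag_mx (\row_(i < 5) (if (i < 3)%N then 1 else -1)).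

Definition acBmetric (phi : 'M[R]_5) (xi : V) (eta : 'rV[R]_5) (G : 'M[R]_5)
  : Prop :=
  [/\ G^T = G, signature_2_3 G,
      phi *m xi = 0 /\
      phi *m phi = - 1%:M + xi *m eta,
      eta *m phi = 0 /\
      etaf eta xi = 1
    & forall x y : V,
        gf G x y = - gf G (phi *m x) (phi *m y) + etaf eta x * etaf eta y].

Definition tensor4 := V -> V -> V -> V -> R.

Definition multilinear4 (L : tensor4) : Prop :=
  [/\ forall (a : R) x x' y z w,
        L (a *: x + x') y z w = a * L x y z w + L x' y z w,
      forall (a : R) x y y' z w,
        L x (a *: y + y') z w = a * L x y z w + L x y' z w,
      forall (a : R) x y z z' w,
        L x y (a *: z + z') w = a * L x y z w + L x y z' w
    & forall (a : R) x y z w w',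
        L x y z (a *: w + w') = a * L x y z w + L x y z w'].

Definition curvature_like (L : tensor4) : Prop :=
  [/\ multilinear4 L,
      forall x y z w, L x y z w = - L y x z w,
      forall x y z w, L x y z w = - L x y w z
    & forall x y z w, L x y z w + L y z x w + L z x y w = 0].

Definition phi_Kaehler_type (phi : 'M[R]_5) (L : tensor4) : Prop :=
  curvature_like L /\
  forall x y z w, L x y (phi *m z) (phi *m w) = - L x y z w.

Definition assoc_tensor (phi : 'M[R]_5) (L : tensor4) : tensor4 :=
  fun x y z w => L x y z (phi *m w).

Section Pis.
Variables (phi : 'M[R]_5) (eta : 'rV[R]_5) (G : 'M[R]_5).
Local Notation g := (gf G).
Local Notation et := (etaf eta).
Local Notation ph x := (phi *m x).

Definition pi1 : tensor4 := fun x y z w => g y z * g x w - g x z * g y w.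
Definition pi2 : tensor4 := fun x y z w =>
  g y (ph z) * g x (ph w) - g x (ph z) * g y (ph w).
Definition pi3 : tensor4 := fun x y z w =>
  - g y z * g x (ph w) - g y (ph z) * g x w
  + g x z * g y (ph w) + g x (ph z) * g y w.
Definition pi4 : tensor4 := fun x y z w =>
  et y * et z * g x w + et x * et w * g y z
  - et x * et z * g y w - et y * et w * g x z.
Definition pi5 : tensor4 := fun x y z w =>
  et y * et z * g x (ph w) + et x * et w * g y (ph z)
  - et x * et z * g y (ph w) - et y * et w * g x (ph z).

Definition L1 : tensor4 := fun x y z w => pi1 x y z w - pi2 x y z w - pi4 x y z w.
Definition L2 : tensor4 := fun x y z w => pi3 x y z w + pi5 x y z w.
End Pis.

(* 2-planes alpha = span(x, y) with x, y linearly independent *)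
Definition lin_indep2 (x y : V) : Prop :=
  forall a b : R, a *: x + b *: y = 0 -> a = 0 /\ b = 0.
Definition in_plane (x y u : V) : Prop := exists a b : R, u = a *: x + b *: y.

Definition plane_nondegenerate (G : 'M[R]_5) (x y : V) : Prop :=
  forall u, in_plane x y u -> (forall v, in_plane x y v -> gf G u v = 0) -> u = 0.
Definition plane_totally_real (phi G : 'M[R]_5) (x y : V) : Prop :=
  forall u v, in_plane x y u -> in_plane x y v -> gf G u (phi *m v) = 0.
Definition plane_orth_xi (G : 'M[R]_5) (xi : V) (x y : V) : Prop :=
  forall u, in_plane x y u -> gf G u xi = 0.

Definition admissible_basis (phi : 'M[R]_5) (xi : V) (G : 'M[R]_5) (x y : V)
  : Prop :=
  [/\ lin_indep2 x y, plane_nondegenerate G x y,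
      plane_totally_real phi G x y & plane_orth_xi G xi x y].

Definition sec_k (G : 'M[R]_5) (L : tensor4) (x y : V) : R :=
  L x y y x / pi1 G x y y x.
Definition sec_kstar (phi G : 'M[R]_5) (L : tensor4) (x y : V) : R :=
  L x y y (phi *m x) / pi1 G x y y x.

End ACB.

(* Main.v *)
Require Import Defs.
From HB Require Import structures.
From mathcomp Require Import all_boot all_order all_algebra.
From mathcomp Require Import ring lra.
From Stdlib Require Import Classical.
Import Order.TTheory GRing.Theory Num.Theory.
Local Open Scope ring_scope.

Section Basic.
Variable R : rcfType.
Variable G : 'M[R]_5.
Variable eta : 'rV[R]_5.
Variable phi : 'M[R]_5.
Local Notation V := 'cV[R]_5.

Lemma gDl (x y z : V) : gf G (x + y) z = gf G x z + gf G y z.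
Proof. by rewrite /gf linearD /= !mulmxDl mxE. Qed.
Lemma gDr (x y z : V) : gf G z (x + y) = gf G z x + gf G z y.
Proof. by rewrite /gf !mulmxDr mxE. Qed.
Lemma gZl (a : R) (x z : V) : gf G (a *: x) z = a * gf G x z.
Proof. by rewrite /gf linearZ /= -!scalemxAl mxE. Qed.
Lemma gZr (a : R) (x z : V) : gf G z (a *: x) = a * gf G z x.
Proof. by rewrite /gf -!scalemxAr mxE. Qed.
Lemma gNl (x z : V) : gf G (- x) z = - gf G x z.
Proof. by rewrite -scaleN1r gZl mulN1r. Qed.
Lemma gNr (x z : V) : gf G z (- x) = - gf G z x.
Proof. by rewrite -scaleN1r gZr mulN1r. Qed.
Lemma g0l (z : V) : gf G 0 z = 0.
Proof. by rewrite -(scale0r (0:V)) gZl mul0r. Qed.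
Lemma g0r (z : V) : gf G z 0 = 0.
Proof. by rewrite -(scale0r (0:V)) gZr mul0r. Qed.
Lemma eD (x y : V) : etaf eta (x + y) = etaf eta x + etaf eta y.
Proof. by rewrite /etaf mulmxDr mxE. Qed.
Lemma eZ (a : R) (x : V) : etaf eta (a *: x) = a * etaf eta x.
Proof. by rewrite /etaf -scalemxAr mxE. Qed.
Lemma eN (x : V) : etaf eta (- x) = - etaf eta x.
Proof. by rewrite -scaleN1r eZ mulN1r. Qed.
Lemma e0 : etaf eta 0 = 0.
Proof. by rewrite /etaf mulmx0 mxE. Qed.
Lemma pD (x y : V) : phi *m (x + y) = phi *m x + phi *m y.
Proof. by rewrite mulmxDr. Qed.
Lemma pZ (a : R) (x : V) : phi *m (a *: x) = a *: (phi *m x).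
Proof. by rewrite -scalemxAr. Qed.
Lemma pN (x : V) : phi *m (- x) = - (phi *m x).
Proof. by rewrite mulmxN. Qed.
Lemma p0 : phi *m (0 : V) = 0.
Proof. by rewrite mulmx0. Qed.

Hypothesis Hsym : G^T = G.
Variable xi : V.
Hypothesis phixi : phi *m xi = 0.
Hypothesis phi2 : phi *m phi = - 1%:M + xi *m eta.
Hypothesis etaphi : eta *m phi = 0.
Hypothesis etaxi : etaf eta xi = 1.
Hypothesis comp : forall x y : V,
  gf G x y = - gf G (phi *m x) (phi *m y) + etaf eta x * etaf eta y.

Lemma gsym (x y : V) : gf G x y = gf G y x.
Proof.
rewrite /gf -[in RHS]Hsym.
have -> : (y^T *m G^T *m x) = (x^T *m G *m y)^T by rewrite !trmx_mul trmxK mulmxA.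
by rewrite [in RHS]mxE.
Qed.

Lemma eg (x : V) : etaf eta x = gf G x xi.
Proof. by rewrite comp phixi g0r oppr0 add0r etaxi mulr1. Qed.

Lemma epx (x : V) : etaf eta (phi *m x) = 0.
Proof. by rewrite /etaf mulmxA etaphi mul0mx mxE. Qed.

Lemma ppx (x : V) : phi *m (phi *m x) = - x + etaf eta x *: xi.
Proof.
rewrite mulmxA phi2 mulmxDl mulNmx mul1mx -mulmxA.
by rewrite [eta *m x]mx11_scalar mul_mx_scalar.
Qed.

Lemma gpp (x y : V) : gf G (phi *m x) (phi *m y) = - gf G x y + etaf eta x * etaf eta y.
Proof. rewrite [gf G x y]comp; ring. Qed.

Lemma gphis (x y : V) : gf G x (phi *m y) = gf G (phi *m x) y.
Proof.
rewrite comp ppx epx mulr0 addr0 gDr gNr gZr -eg epx mulr0 addr0.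
by rewrite opprK.
Qed.


Lemma Gunit : signature_2_3 G -> G \in unitmx.
Proof.
case=> P [Pu HD].
have : (P^T *m G *m P) \in unitmx.
  rewrite HD unitmxE det_diag unitfE.
  apply/prodf_neq0 => i _; rewrite mxE.
  by case: ifP => _; rewrite ?oppr_eq0 oner_eq0.
by rewrite !unitmx_mul => /andP[/andP[_ ->] _].
Qed.

Lemma nondeg (a : V) : G \in unitmx -> (forall w, gf G a w = 0) -> a = 0.
Proof.
move=> Gu h.
have H : a^T *m G = 0.
  apply/rowP => j; have := h (delta_mx j 0).
  by rewrite /gf -colE !mxE.
have : a^T = 0 by rewrite -(mulmxK Gu (a^T)) H mul0mx.
by move/(congr1 trmx); rewrite trmxK trmx0.
Qed.

Lemma trace_trick (Y : 'M[R]_5) : G \in unitmx -> \tr Y != 0 ->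
  (forall v w, gf G (Y *m v) (w - Y *m w) = 0) ->
  exists v, gf G (Y *m v) (Y *m v) != 0.
Proof.
move=> Gu htr horth.
case: (classic (exists v, gf G (Y *m v) (Y *m v) != 0)) => // hn.
exfalso.
have h0 : forall v : V, gf G (Y *m v) (Y *m v) = 0.
  move=> v; apply/eqP; apply/negPn/negP => H; apply: hn; by exists v.
have h1 : forall v w : V, gf G (Y *m v) (Y *m w) = 0.
  move=> v w; have := h0 (v + w); rewrite mulmxDr gDl !gDr h0 h0.
  rewrite (gsym (Y *m w) (Y *m v)) => E; lra.
have h2 : forall v : V, Y *m v = 0.
  move=> v; apply: nondeg => // w.
  have := horth v w; rewrite gDr gNr h1; lra.
have Y0 : Y = 0.
  apply/matrixP => i j; have := h2 (delta_mx j 0); rewrite -colE.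
  by move/colP/(_ i); rewrite !mxE.
by move: htr; rewrite Y0 mxtrace0 eqxx.
Qed.


Lemma exists_s (a b : R) : a != 0 ->
  exists s : R, s ^+ 2 = a ^+ 2 + b ^+ 2 /\ a + s != 0.
Proof.
move=> a0.
have hp : 0 <= a ^+ 2 + b ^+ 2 by rewrite addr_ge0 // sqr_ge0.
case: (ltrP 0 a) => ha.
  exists (Num.sqrt (a ^+ 2 + b ^+ 2)); split; first by rewrite sqr_sqrtr.
  have := sqrtr_ge0 (a ^+ 2 + b ^+ 2) => h; apply/eqP => E; lra.
exists (- Num.sqrt (a ^+ 2 + b ^+ 2)); split; first by rewrite sqrrN sqr_sqrtr.
have ha' : a < 0 by rewrite lt_neqAle a0 ha.
have := sqrtr_ge0 (a ^+ 2 + b ^+ 2) => h; apply/eqP => E; lra.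
Qed.

Lemma rotate (u : V) : etaf eta u = 0 -> gf G u u != 0 ->
  exists al be : R,
    gf G (al *: u + be *: (phi *m u)) (phi *m (al *: u + be *: (phi *m u))) = 0
    /\ gf G (al *: u + be *: (phi *m u)) (al *: u + be *: (phi *m u)) != 0.
Proof.
move=> hu hn.
set a := gf G u u; set b := gf G u (phi *m u).
have [s [hs hs0]] := @exists_s a b hn.
exists (a + s), b.
rewrite pD !pZ ppx hu scale0r addr0.
rewrite !(gDl, gDr, gZl, gZr, gNl, gNr) gpp hu mulr0 addr0 (gsym (phi *m u) u) -/a -/b.
split.
  transitivity (b * (s ^+ 2 - (a ^+ 2 + b ^+ 2))); first ring.
  by rewrite hs subrr mulr0.
match goal with |- is_true (~~ (?X == 0)) =>
  have -> : X = 2 * (a ^+ 2 + b ^+ 2) * (a + s) + a * (s ^+ 2 - (a ^+ 2 + b ^+ 2)) by ring end.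
rewrite hs subrr mulr0 addr0.
have ha2 : 0 < a ^+ 2 by rewrite exprn_even_gt0.
have : 0 < a ^+ 2 + b ^+ 2 by rewrite ltr_wpDr // sqr_ge0.
move=> hp; rewrite !mulf_neq0 //; [by rewrite pnatr_eq0| by rewrite gt_eqF].
Qed.


Lemma mx11_mul (x : V) (M : 'M[R]_(1,5)) (v : V) :
  x *m M *m v = (M *m v) 0 0 *: x.
Proof. by rewrite -mulmxA {1}[M *m v]mx11_scalar mul_mx_scalar. Qed.

Lemma tr_rank1 (x : V) (M : 'M[R]_(1,5)) : \tr (x *m M) = (M *m x) 0 0.
Proof. by rewrite mxtrace_mulC /mxtrace big_ord1. Qed.

Lemma step1 : G \in unitmx -> exists u : V, etaf eta u = 0 /\ gf G u u != 0.
Proof.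
move=> Gu.
pose Y0 : 'M[R]_5 := 1%:M - xi *m eta.
have Y0E : forall v, Y0 *m v = v - etaf eta v *: xi.
  move=> v; rewrite /Y0 mulmxBl mul1mx.
  by rewrite -mulmxA {1}[eta *m v]mx11_scalar mul_mx_scalar.
have eY0 : forall v, etaf eta (Y0 *m v) = 0.
  by move=> v; rewrite Y0E eD eN eZ etaxi mulr1 subrr.
have htr : \tr Y0 != 0.
  rewrite /Y0 raddfB /= mxtrace1 tr_rank1 -/(etaf eta xi) etaxi.
  by rewrite -(natrB _ (isT : (1 <= 5)%N)) pnatr_eq0.
have [|v hv] := @trace_trick Y0 Gu htr.
  by move=> v w; rewrite (Y0E w) opprB addrC subrK gZr -eg eY0 mulr0.
by exists (Y0 *m v).
Qed.


Lemma step2 (x : V) : G \in unitmx -> etaf eta x = 0 -> gf G x x != 0 ->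
  gf G x (phi *m x) = 0 ->
  exists u : V, [/\ etaf eta u = 0, gf G u u != 0, gf G x u = 0 & gf G (phi *m x) u = 0].
Proof.
move=> Gu ex hc hxp.
set c := gf G x x in hc.
set px := phi *m x.
have gpxpx : gf G px px = - c by rewrite /px gpp ex mulr0 addr0.
have gxpx : gf G px x = 0 by rewrite gsym.
pose Y1 : 'M[R]_5 := 1%:M - xi *m eta - c^-1 *: (x *m (x^T *m G))
   + c^-1 *: (px *m (px^T *m G)).
have Y1E : forall v, Y1 *m v = v - etaf eta v *: xi - (c^-1 * gf G x v) *: x
   + (c^-1 * gf G px v) *: px.
  move=> v; rewrite /Y1 !(mulmxDl, mulNmx) mul1mx -!scalemxAl !mx11_mul !scalerA.
  by [].
have h1 : forall v, gf G (Y1 *m v) xi = 0.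
  move=> v; rewrite Y1E !(gDl, gNl, gZl) -!eg etaxi ex /px epx; ring.
have h2 : forall v, gf G (Y1 *m v) x = 0.
  move=> v; rewrite Y1E !(gDl, gNl, gZl) (gsym xi x) -eg ex gxpx -/c (gsym v x).
  by field.
have h3 : forall v, gf G (Y1 *m v) px = 0.
  move=> v; rewrite Y1E !(gDl, gNl, gZl) (gsym xi px) -eg /px epx gpxpx hxp (gsym v px).
  by field.
have htr : \tr Y1 != 0.
  rewrite /Y1 !raddfD !raddfN /= !mxtraceZ mxtrace1 !tr_rank1.
  rewrite -/(etaf eta xi) etaxi -/(gf G x x) -/(gf G px px) gpxpx -/c.
  rewrite mulrN mulVf //; apply/eqP => E; lra.
have [|v hv] := @trace_trick Y1 Gu htr.
  move=> v w.
  have -> : w - Y1 *m w = etaf eta w *: xi + (c^-1 * gf G x w) *: x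
        - (c^-1 * gf G px w) *: px.
    by rewrite Y1E !opprD !opprK !addrA addrN add0r.
  by rewrite !(gDr, gNr, gZr) h1 h2 h3 !mulr0 !addr0 oppr0 add0r.
exists (Y1 *m v); split => //.
- by rewrite eg h1.
- by rewrite gsym h2.
- by rewrite gsym h3.
Qed.


Lemma basis_ex : G \in unitmx -> exists e1 e2 : V,
  [/\ etaf eta e1 = 0, etaf eta e2 = 0, gf G e1 e1 != 0 & gf G e2 e2 != 0] /\
  [/\ gf G e1 e2 = 0, gf G e1 (phi *m e1) = 0, gf G e2 (phi *m e2) = 0
    & gf G e1 (phi *m e2) = 0].
Proof.
move=> Gu.
have [u [hu hn]] := step1 Gu.
have [al [be [h1 h2]]] := @rotate u hu hn.
set x := al *: u + be *: (phi *m u) in h1 h2.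
have ex : etaf eta x = 0 by rewrite /x eD !eZ hu epx !mulr0 addr0.
have [u2 [e2 n2 o1 o2]] := @step2 x Gu ex h2 h1.
have [al2 [be2 [h3 h4]]] := @rotate u2 e2 n2.
set y := al2 *: u2 + be2 *: (phi *m u2) in h3 h4.
exists x, y; split; split => //.
- by rewrite /y eD !eZ e2 epx !mulr0 addr0.
- by rewrite /y !(gDr, gZr) o1 gphis o2 !mulr0 addr0.
- by rewrite /y pD !pZ ppx e2 scale0r addr0 !(gDr, gZr, gNr) gphis o2 o1 oppr0 !mulr0 addr0.
Qed.


Lemma gphis2 (a b : V) : gf G a (phi *m b) = gf G b (phi *m a).
Proof. by rewrite gphis gsym. Qed.

Ltac gnorm x y z w := rewrite ?(gsym y x) ?(gsym z x) ?(gsym w x) ?(gsym z y)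
  ?(gsym w y) ?(gsym w z) ?(gphis2 y x) ?(gphis2 z x) ?(gphis2 w x)
  ?(gphis2 z y) ?(gphis2 w y) ?(gphis2 w z).

Local Notation l1 := (L1 phi eta G).
Local Notation l2 := (L2 phi eta G).

Lemma L1_ml : multilinear4 l1.
Proof.
split=> *; rewrite /L1 /pi1 /pi2 /pi4 !(pD, pZ, gDl, gDr, gZl, gZr, eD, eZ); ring.
Qed.
Lemma L2_ml : multilinear4 l2.
Proof.
split=> *; rewrite /L2 /pi3 /pi5 !(pD, pZ, gDl, gDr, gZl, gZr, eD, eZ); ring.
Qed.

Lemma L1_cl : curvature_like l1.
Proof.
split; first exact: L1_ml.
- move=> x y z w; rewrite /L1 /pi1 /pi2 /pi4; ring.
- move=> x y z w; rewrite /L1 /pi1 /pi2 /pi4; ring.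
- move=> x y z w; rewrite /L1 /pi1 /pi2 /pi4; gnorm x y z w; ring.
Qed.
Lemma L2_cl : curvature_like l2.
Proof.
split; first exact: L2_ml.
- move=> x y z w; rewrite /L2 /pi3 /pi5; ring.
- move=> x y z w; rewrite /L2 /pi3 /pi5; ring.
- move=> x y z w; rewrite /L2 /pi3 /pi5; gnorm x y z w; ring.
Qed.

Lemma L1_K x y z w : l1 x y (phi *m z) (phi *m w) = - l1 x y z w.
Proof.
rewrite /L1 /pi1 /pi2 /pi4 !ppx !epx !(gDr, gNr, gZr) -!eg; gnorm x y z w; ring.
Qed.
Lemma L2_K x y z w : l2 x y (phi *m z) (phi *m w) = - l2 x y z w.
Proof.
rewrite /L2 /pi3 /pi5 !ppx !epx !(gDr, gNr, gZr) -!eg; gnorm x y z w; ring.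
Qed.


Lemma lin_facts (F : V -> R) :
  (forall (a : R) x x', F (a *: x + x') = a * F x + F x') ->
  [/\ F 0 = 0, forall x, F (- x) = - F x, forall x y, F (x + y) = F x + F y
    & forall a x, F (a *: x) = a * F x].
Proof.
move=> hF.
have F0 : F 0 = 0 by have := hF 1 0 0; rewrite scale1r addr0 mul1r => h; lra.
split => //.
- by move=> x; have := hF (-1) x 0; rewrite addr0 scaleN1r F0 addr0 mulN1r.
- by move=> x y; have := hF 1 x y; rewrite scale1r mul1r.
- by move=> a x; have := hF a x 0; rewrite addr0 F0 addr0.
Qed.

Section Tkill.
Variable T : tensor4 R.
Hypothesis hT : phi_Kaehler_type phi T.
Variables e1 e2 : V.
Hypothesis he1 : etaf eta e1 = 0.
Hypothesis he2 : etaf eta e2 = 0.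
Local Notation f1 := (phi *m e1).
Local Notation f2 := (phi *m e2).

Definition inS (v : V) := v = e1 \/ v = e2 \/ v = f1 \/ v = f2 \/ v = xi.

Lemma T3N x y z w : T x y (- z) w = - T x y z w.
Proof.
case: hT => [[[_ _ h _] _ _ _] _].
by case: (lin_facts (fun z => T x y z w) (fun a z z' => h a x y z z' w)) => _ -> _ _.
Qed.
Lemma T30 x y w : T x y 0 w = 0.
Proof.
case: hT => [[[_ _ h _] _ _ _] _].
by case: (lin_facts (fun z => T x y z w) (fun a z z' => h a x y z z' w)) => -> _ _ _.
Qed.

Lemma Tpair x y z w : T x y z w = T z w x y.
Proof.
case: hT => [[_ a1 a2 b] _].
have := b x y z w.
have := b x y w z.
have := b x z w y.
have := b y z w x.
have := a1 w x y z; have := a2 w x y z; have := a2 x w y z.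
have := a1 w x z y; have := a2 w x z y; have := a2 x w z y.
have := a1 w y z x; have := a2 w y z x; have := a2 y w z x.
have := a1 x y w z; have := a2 x y w z; have := a2 y x w z.
have := a1 x y z w; have := a2 x y z w; have := a2 y x z w.
have := a1 x z w y; have := a2 x z w y; have := a2 z x w y.
have := a1 y w x z; have := a2 y w x z; have := a2 w y x z.
have := a1 y z w x; have := a2 y z w x; have := a2 z y w x.
have := a1 y z x w; have := a2 y z x w; have := a2 z y x w.
have := a1 z w x y; have := a2 z w x y; have := a2 w z x y.
have := a1 z w y x; have := a2 z w y x; have := a2 w z y x.
have := a1 z x y w; have := a2 z x y w; have := a2 x z y w.
move=> *; lra.
Qed.

Lemma Tanti x y z : T x y z z = 0.
Proof. case: hT => [[_ _ a2 _] _]; have := a2 x y z z; lra. Qed.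

Lemma TK2 x y z w : etaf eta z = 0 -> T x y (phi *m z) w = T x y z (phi *m w).
Proof.
move=> hz; case: hT => [_ K].
have := K x y (phi *m z) w; rewrite ppx hz scale0r addr0 T3N => E; lra.
Qed.

Lemma TzJz x y z : etaf eta z = 0 -> T x y z (phi *m z) = 0.
Proof.
move=> hz; have := TK2 x y z z hz; case: hT => [[_ _ a2 _] _].
have := a2 x y z (phi *m z); lra.
Qed.

Lemma Txi3 x y w : T x y xi w = 0.
Proof.
case: hT => [_ K]; have := K x y xi w; rewrite phixi T30 => E; lra.
Qed.
Lemma Txi4 x y z : T x y z xi = 0.
Proof. case: hT => [[_ _ a2 _] _]; by rewrite a2 Txi3 oppr0. Qed.

Lemma second x y : T x y e1 e2 = 0 -> T x y e1 f2 = 0 ->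
  forall z w, inS z -> inS w -> T x y z w = 0.
Proof.
move=> t12 t1J2.
case: hT => [[_ _ a2 _] K].
have ef1 : etaf eta f1 = 0 by rewrite epx.
have ef2 : etaf eta f2 = 0 by rewrite epx.
have t21 : T x y e2 e1 = 0 by rewrite a2 t12 oppr0.
have tJ21 : T x y f2 e1 = 0 by rewrite a2 t1J2 oppr0.
have tJ12 : T x y f1 e2 = 0 by rewrite TK2.
have t2J1 : T x y e2 f1 = 0 by rewrite a2 tJ12 oppr0.
have tJJ : T x y f1 f2 = 0 by rewrite K t12 oppr0.
have tJJ' : T x y f2 f1 = 0 by rewrite a2 tJJ oppr0.
have t1J1 : T x y e1 f1 = 0 by rewrite TzJz.
have t2J2 : T x y e2 f2 = 0 by rewrite TzJz.
have tJ11 : T x y f1 e1 = 0 by rewrite a2 t1J1 oppr0.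
have tJ22 : T x y f2 e2 = 0 by rewrite a2 t2J2 oppr0.
move=> z w hz hw.
case: hz => [->|[->|[->|[->|->]]]]; last by rewrite Txi3.
all: case: hw => [->|[->|[->|[->|->]]]]; by rewrite ?Txi4 ?Tanti.
Qed.

Lemma Tkill : T e1 e2 e2 e1 = 0 -> T e1 e2 e2 f1 = 0 ->
  forall a b c d, inS a -> inS b -> inS c -> inS d -> T a b c d = 0.
Proof.
move=> h1 h2.
case: hT => [[_ a1 a2 b] K].
have A1 : T e1 e2 e1 e2 = 0 by rewrite a2 h1 oppr0.
have A2 : T e1 e2 e1 f2 = 0.
  have := TK2 e1 e2 e2 e1 he2; rewrite h2 => E.
  have := a2 e1 e2 e1 f2; lra.
have S1 := @second e1 e2 A1 A2.
have B1 : T e1 f2 e1 e2 = 0 by rewrite Tpair A2.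
have B2 : T e1 f2 e1 f2 = 0.
  have := b e1 e2 f1 f2.
  rewrite K A1 oppr0 add0r.
  have -> : T f1 e1 e2 f2 = 0.
    by rewrite a1 Tpair TzJz // oppr0.
  rewrite addr0 Tpair -(TK2 _ _ _ _ he2) a2 => E; lra.
have S2 := @second e1 f2 B1 B2.
move=> a0 b0 c d ha hb hc hd.
apply: second => //.
- by rewrite Tpair S1.
- by rewrite Tpair S2.
Qed.

End Tkill.


Lemma span5 (s : 'I_5 -> V) (n : 'I_5 -> R) : (forall j, n j != 0) ->
  (forall j k, gf G (s j) (s k) = if j == k then n j else 0) ->
  forall w, (forall j, gf G (s j) w = 0) -> w = 0.
Proof.
move=> hn hs w hw.
pose E : 'M[R]_5 := \matrix_(i, j) s j i 0.
have EG : forall w : V, E^T *m G *m w = \col_j gf G (s j) w.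
  move=> u; apply/colP => j; rewrite !mxE /gf mxE.
  apply: eq_bigr => k _; congr (_ * _); rewrite !mxE.
  by apply: eq_bigr => l _; rewrite !mxE.
have colE' : forall k, col k E = s k by move=> k; apply/colP => i; rewrite !mxE.
have D : E^T *m G *m E = diag_mx (\row_j n j).
  apply/matrixP => j k.
  transitivity ((E^T *m G *m (col k E)) j 0); first by rewrite colE mulmxA -colE [(col _ _) _ _]mxE.
  rewrite colE' EG !mxE hs.
  by case: eqP => [->|]; rewrite ?mulr1n ?mulr0n.
have Du : E^T *m G *m E \in unitmx.
  rewrite D unitmxE det_diag unitfE.
  by apply/prodf_neq0 => i _; rewrite mxE.
have Au : E^T *m G \in unitmx by move: Du; rewrite unitmx_mul => /andP[].
have : E^T *m G *m w = 0 by rewrite EG; apply/colP => j; rewrite !mxE hw.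
by move/(congr1 (mulmx (invmx (E^T *m G)))); rewrite mulKmx // mulmx0.
Qed.


Section Decomp.
Variables e1 e2 : V.
Hypotheses (he1 : etaf eta e1 = 0) (he2 : etaf eta e2 = 0)
  (n1 : gf G e1 e1 != 0) (n2 : gf G e2 e2 != 0) (o12 : gf G e1 e2 = 0)
  (o11 : gf G e1 (phi *m e1) = 0) (o22 : gf G e2 (phi *m e2) = 0)
  (o12' : gf G e1 (phi *m e2) = 0).
Hypothesis Gu : G \in unitmx.
Local Notation f1 := (phi *m e1).
Local Notation f2 := (phi *m e2).

Lemma decomp (v : V) :
  v = (gf G e1 v / gf G e1 e1) *: e1 + (gf G e2 v / gf G e2 e2) *: e2
    + (- (gf G f1 v / gf G e1 e1)) *: f1 + (- (gf G f2 v / gf G e2 e2)) *: f2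
    + etaf eta v *: xi.
Proof.
pose s (j : 'I_5) : V := nth 0 [:: e1; e2; f1; f2; xi] j.
pose n (j : 'I_5) : R := nth 0 [:: gf G e1 e1; gf G e2 e2; - gf G e1 e1; - gf G e2 e2; 1] j.
have F1 : gf G f1 f1 = - gf G e1 e1 by rewrite gpp he1 mulr0 addr0.
have F2 : gf G f2 f2 = - gf G e2 e2 by rewrite gpp he2 mulr0 addr0.
have F3 : gf G xi xi = 1 by rewrite -eg etaxi.
have F4 : gf G e1 f1 = 0 by [].
have F5 : gf G e1 xi = 0 by rewrite -eg.
have F6 : gf G e2 f1 = 0 by rewrite gphis2.
have F7 : gf G e2 xi = 0 by rewrite -eg.
have F8 : gf G f1 f2 = 0 by rewrite gpp o12 he1 mul0r oppr0 addr0.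
have F9 : gf G f1 xi = 0 by rewrite -eg epx.
have F10 : gf G f2 xi = 0 by rewrite -eg epx.
have F11 : gf G f2 f1 = 0 by rewrite gsym.
have F12 : gf G e2 e1 = 0 by rewrite gsym.
have F13 : gf G f1 e1 = 0 by rewrite gsym.
have F14 : gf G xi e1 = 0 by rewrite gsym.
have F15 : gf G f1 e2 = 0 by rewrite gsym.
have F16 : gf G f2 e1 = 0 by rewrite gsym.
have F17 : gf G xi e2 = 0 by rewrite gsym.
have F18 : gf G f2 e2 = 0 by rewrite gsym.
have F19 : gf G xi f1 = 0 by rewrite gsym.
have F20 : gf G xi f2 = 0 by rewrite gsym.
have hn : forall j, n j != 0.
  by case=> [[|[|[|[|[|j]]]]] hj] //=; rewrite ?oppr_eq0 ?oner_eq0.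
have hs : forall j k, gf G (s j) (s k) = if j == k then n j else 0.
  case=> [[|[|[|[|[|j]]]]] hj] //; case=> [[|[|[|[|[|k]]]]] hk] //=.
  all: rewrite ?F1 ?F2 ?F3 ?F4 ?F5 ?F6 ?F7 ?F8 ?F9 ?F10 ?F11 ?F12 ?F13
    ?F14 ?F15 ?F16 ?F17 ?F18 ?F19 ?F20 ?o12 ?o11 ?o22 ?o12'.
apply/eqP; rewrite -subr_eq0; apply/eqP; apply: (@span5 s n hn hs) => j.
have gx : gf G xi v = etaf eta v by rewrite gsym -eg.
case: j => [[|[|[|[|[|j]]]]] hj] //; rewrite /s /=; rewrite !(gDr, gNr, gZr).
all: rewrite ?F1 ?F2 ?F3 ?F4 ?F5 ?F6 ?F7 ?F8 ?F9 ?F10 ?F11 ?F12 ?F13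
    ?F14 ?F15 ?F16 ?F17 ?F18 ?F19 ?F20 ?o12 ?o11 ?o22 ?o12' ?gx.
all: field.
all: by rewrite n1 n2.
Qed.

Lemma slot (F : V -> R) :
  (forall (a : R) x x', F (a *: x + x') = a * F x + F x') ->
  (forall s, inS e1 e2 s -> F s = 0) -> forall v, F v = 0.
Proof.
move=> hF hS v; rewrite (decomp v).
case: (@lin_facts F hF) => _ _ hD hZ.
rewrite !hD !hZ !hS; first (by rewrite !mulr0 !addr0);
  rewrite /inS; tauto.
Qed.

Lemma T_zero (T : tensor4 R) : phi_Kaehler_type phi T ->
  T e1 e2 e2 e1 = 0 -> T e1 e2 e2 f1 = 0 -> forall x y z w, T x y z w = 0.
Proof.
move=> hT h1 h2.
have K := @Tkill T hT e1 e2 he1 he2 h1 h2.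
case: hT => [[[m1 m2 m3 m4] _ _ _] _].
have S4 : forall a b c, inS e1 e2 a -> inS e1 e2 b -> inS e1 e2 c ->
    forall w, T a b c w = 0.
  move=> a b c ha hb hc; apply: slot => [al x x'|d hd]; first exact: m4.
  exact: K.
have S3 : forall a b, inS e1 e2 a -> inS e1 e2 b -> forall z w, T a b z w = 0.
  move=> a b ha hb z w; apply: (slot (fun z => T a b z w)) => [al x x'|d hd].
    exact: m3.
  exact: S4.
have S2 : forall a, inS e1 e2 a -> forall y z w, T a y z w = 0.
  move=> a ha y z w; apply: (slot (fun y => T a y z w)) => [al x x'|d hd].
    exact: m2.
  exact: S3.
move=> x y z w; apply: (slot (fun x => T x y z w)) => [al u u'|d hd].
  exact: m1.
exact: S2.
Qed.

End Decomp.


Lemma vals (x y : V) : etaf eta x = 0 -> etaf eta y = 0 ->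
  gf G x (phi *m x) = 0 -> gf G y (phi *m y) = 0 -> gf G x (phi *m y) = 0 ->
  [/\ l1 x y y x = pi1 G x y y x, l2 x y y x = 0,
      l1 x y y (phi *m x) = 0 & l2 x y y (phi *m x) = pi1 G x y y x].
Proof.
move=> ex ey hx hy hxy.
have hyx : gf G y (phi *m x) = 0 by rewrite gphis2.
rewrite /L1 /L2 /pi1 /pi2 /pi3 /pi4 /pi5 !ppx ex ey !epx hx hy hxy hyx.
split; rewrite ?(gDr, gNr, gZr) -?eg ?ex ?ey; ring.
Qed.

Lemma pi1_nz (x y : V) : lin_indep2 x y -> plane_nondegenerate G x y ->
  pi1 G x y y x != 0.
Proof.
move=> li nd; apply/eqP => P0.
rewrite /pi1 (gsym y x) in P0.
have [a [b [ab0 hx hy]]] : exists a b : R, [/\ (a != 0) || (b != 0),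
   gf G (a *: x + b *: y) x = 0 & gf G (a *: x + b *: y) y = 0].
  case: (boolP ((gf G x x == 0) && (gf G x y == 0))) => [/andP[/eqP h1 /eqP h2]|h].
    exists 1, 0; rewrite oner_eq0 /= !(gDl, gZl) h1 h2 (gsym y x) h2.
    by split; ring.
  exists (gf G x y), (- gf G x x); split.
  - by move: h; rewrite negb_and oppr_eq0 orbC.
  - by rewrite !(gDl, gZl) (gsym y x); ring.
  - rewrite !(gDl, gZl); nra.
have u0 : a *: x + b *: y = 0.
  apply: nd; first by exists a, b.
  move=> v [c [d ->]]; rewrite !(gDr, gZr) hx hy; ring.
have [ha hb] := li a b u0.
by move: ab0; rewrite ha hb eqxx.
Qed.

Lemma main (L : tensor4 R) : signature_2_3 G -> phi_Kaehler_type phi L ->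
  exists nu nustar : R,
    [/\ (forall x y z w,
           L x y z w = nu * l1 x y z w + nustar * l2 x y z w),
        (exists x y, admissible_basis phi xi G x y)
      & (forall x y, admissible_basis phi xi G x y ->
           sec_k G L x y = nu /\ sec_kstar phi G L x y = nustar)].
Proof.
move=> hsig hL.
have Gu := Gunit hsig.
have [e1 [e2 [[he1 he2 n1 n2] [o12 o11 o22 o12']]]] := basis_ex Gu.
have Pnz : pi1 G e1 e2 e2 e1 != 0.
  by rewrite /pi1 o12 mul0r subr0 mulf_neq0.
have [v1 v2 v3 v4] := @vals e1 e2 he1 he2 o11 o22 o12'.
set P := pi1 G e1 e2 e2 e1 in Pnz v1 v4.
pose nu := L e1 e2 e2 e1 / P.
pose nus := L e1 e2 e2 (phi *m e1) / P.
pose T : tensor4 R := fun x y z w => L x y z w - (nu * l1 x y z w + nus * l2 x y z w).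
have hT : phi_Kaehler_type phi T.
  case: hL => [[[m1 m2 m3 m4] a1 a2 b] K].
  case: L1_cl => [[p1 p2 p3 p4] c1 c2 d]; case: L2_cl => [[q1 q2 q3 q4] r1 r2 s].
  split; first split; first split.
  - by move=> *; rewrite /T m1 p1 q1; ring.
  - by move=> *; rewrite /T m2 p2 q2; ring.
  - by move=> *; rewrite /T m3 p3 q3; ring.
  - by move=> *; rewrite /T m4 p4 q4; ring.
  - by move=> x y z w; rewrite /T a1 c1 r1; ring.
  - by move=> x y z w; rewrite /T a2 c2 r2; ring.
  - move=> x y z w; rewrite /T.
    transitivity ((L x y z w + L y z x w + L z x y w)
      - nu * (l1 x y z w + l1 y z x w + l1 z x y w)
      - nus * (l2 x y z w + l2 y z x w + l2 z x y w)); first ring.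
    by rewrite b d s !mulr0 !subr0.
  - by move=> x y z w; rewrite /T K L1_K L2_K; ring.
have T0 := @T_zero e1 e2 he1 he2 n1 n2 o12 o11 o22 o12' T hT.
have T0' : forall x y z w, T x y z w = 0.
  apply: T0.
  - by rewrite /T v1 v2 /nu; field.
  - by rewrite /T v3 v4 /nus; field.
have dec : forall x y z w, L x y z w = nu * l1 x y z w + nus * l2 x y z w.
  by move=> x y z w; have := T0' x y z w; rewrite /T => E; lra.
exists nu, nus; split => //.
- exists e1, e2; split.
  + move=> a b E.
    have := congr1 (fun v => gf G e1 v) E; rewrite !(gDr, gZr) o12 g0r mulr0 addr0.
    have := congr1 (fun v => gf G e2 v) E; rewrite !(gDr, gZr) g0r (gsym e2 e1) o12 mulr0 add0r.
    move=> /eqP; rewrite mulf_eq0 (negbTE n2) orbF => /eqP ->.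
    by move=> /eqP; rewrite mulf_eq0 (negbTE n1) orbF => /eqP ->.
  + move=> u [a [b ->]] hu.
    have i1 : in_plane e1 e2 e1 by exists 1, 0; rewrite scale1r scale0r addr0.
    have i2 : in_plane e1 e2 e2 by exists 0, 1; rewrite scale1r scale0r add0r.
    have := hu e1 i1; have := hu e2 i2.
    rewrite !(gDl, gZl) o12 (gsym e2 e1) o12 !mulr0 addr0 add0r.
    move=> /eqP; rewrite mulf_eq0 (negbTE n2) orbF => /eqP ->.
    move=> /eqP; rewrite mulf_eq0 (negbTE n1) orbF => /eqP ->.
    by rewrite !scale0r addr0.
  + move=> u v [a [b ->]] [c [d ->]].
    rewrite pD !pZ !(gDl, gDr, gZl, gZr) o11 o22 o12' gphis2 o12'.
    ring.
  + move=> u [a [b ->]]; rewrite !(gDl, gZl) -!eg he1 he2; ring.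
move=> x y [li nd tr ox].
have inx : in_plane x y x by exists 1, 0; rewrite scale1r scale0r addr0.
have iny : in_plane x y y by exists 0, 1; rewrite scale1r scale0r add0r.
have ex : etaf eta x = 0 by rewrite eg ox.
have ey : etaf eta y = 0 by rewrite eg ox.
have [w1 w2 w3 w4] := @vals x y ex ey (tr _ _ inx inx) (tr _ _ iny iny) (tr _ _ inx iny).
have Pn := @pi1_nz x y li nd.
rewrite /sec_k /sec_kstar !dec w1 w2 w3 w4; split; field. all: exact: Pn.
Qed.

End Basic.

Theorem theorem3p3 (R : rcfType) (phi : 'M[R]_5) (xi : 'cV[R]_5)
    (eta : 'rV[R]_5) (G : 'M[R]_5) (L : tensor4 R) :
  acBmetric phi xi eta G ->
  phi_Kaehler_type phi L ->
  exists nu nustar : R,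
    [/\ (forall x y z w,
           L x y z w = nu * L1 phi eta G x y z w + nustar * L2 phi eta G x y z w),
        (exists x y, admissible_basis phi xi G x y)
      & (forall x y, admissible_basis phi xi G x y ->
           sec_k G L x y = nu /\ sec_kstar phi G L x y = nustar)].
Proof.
case=> Hsym Hsig [phixi phi2] [etaphi etaxi] comp hL.
exact: (@main R G eta phi Hsym xi phixi phi2 etaphi etaxi comp L Hsig hL).
Qed.
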